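(* For a tree $T$ of order $n$, the following statements are equivalent: (a) $\mathrm{diss}(T)=\frac{2n}{3}$; (b) $T\in\mathcal{T}$; (c) $n\equiv 0 \pmod 3$, and for every vertex $y$ of $T$, at most two components of $T-y$ have order not congruent to $0$ modulo $3$.
   Context: A set $D$ of vertices of a graph $G$ is a dissociation set if the induced subgraph $G[D]$ has maximum degree at most $1$; $\mathrm{diss}(G)$ is the maximum cardinality of a dissociation set of $G$. Operation $(O_1)$ applied to a graph $G'$: add three new vertices $u,v,w$ with edges $uv$, $vw$, and one edge from $w$ to some vertex of $G'$ (i.e., attach a new path $P_3$ by an edge at one of its endvertices). Operation $(O_2)$ applied to $G'$: add three new vertices $v,u,u'$ with edges $vu$, $vu'$, and one edge from $v$ to some vertex of $G'$ (i.e., attach a new $P_3$ by an edge at its central vertex). $\mathcal{T}$ is the set of all trees obtained from the path $P_3$ on three vertices by finitely many (possibly zero) applications of $(O_1)$ and $(O_2)$. *)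

(* Defs.v *)
From mathcomp Require Import all_boot.
Set Implicit Arguments. Unset Strict Implicit. Unset Printing Implicit Defensive.

(* A finite simple graph: vertex type T : finType, adjacency adj : rel T,
   assumed symmetric and irreflexive (hypotheses of the theorem). *)

(* A tree: nonempty, connected, and without cycles (a cycle being a
   duplicate-free closed walk with at least 3 vertices). *)
Definition is_tree (T : finType) (adj : rel T) : Prop :=
  0 < #|T| /\
  (forall x y : T, connect adj x y) /\
  (forall s : seq T, ucycle adj s -> size s <= 2).

Definition dissociation (T : finType) (adj : rel T) (D : {set T}) : bool :=
  [forall x in D, #|[set y in D | adj x y]| <= 1].

Definition diss (T : finType) (adj : rel T) : nat :=
  \max_(D : {set T} | dissociation adj D) #|D|.

Definition del_adj (T : finType) (adj : rel T) (y : T) : rel T :=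
  fun a b => [&& a != y, b != y & adj a b].

Definition components_minus (T : finType) (adj : rel T) (y : T) : {set {set T}} :=
  [set [set z | connect (del_adj adj y) x z] | x in [set~ y]].

(* The class 𝒯, on graphs with vertex set {0,...,n-1} (encoded in nat).
   sym_pair a b x y  <=>  {x,y} = {a,b}. *)
Definition sym_pair (a b x y : nat) : bool :=
  ((x == a) && (y == b)) || ((x == b) && (y == a)).

Inductive inTT : nat -> rel nat -> Prop :=
| TT_P3 : forall e : rel nat,
    (forall x y, e x y = sym_pair 0 1 x y || sym_pair 1 2 x y) ->
    inTT 3 e
| TT_O1 : forall n (e e' : rel nat) (z : nat), inTT n e -> z < n ->
    (* new vertices u = n, v = n+1, w = n+2; edges uv, vw, wz *)
    (forall x y, e' x y = [|| [&& x < n, y < n & e x y],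
                              sym_pair n n.+1 x y,
                              sym_pair n.+1 n.+2 x y |
                              sym_pair n.+2 z x y]) ->
    inTT (n + 3) e'
| TT_O2 : forall n (e e' : rel nat) (z : nat), inTT n e -> z < n ->
    (* new vertices v = n, u = n+1, u' = n+2; edges vu, vu', vz *)
    (forall x y, e' x y = [|| [&& x < n, y < n & e x y],
                              sym_pair n n.+1 x y,
                              sym_pair n n.+2 x y |
                              sym_pair n z x y]) ->
    inTT (n + 3) e'.

Definition in_class_T (T : finType) (adj : rel T) : Prop :=
  exists (n : nat) (e : rel nat) (f : T -> nat),
    [/\ inTT n e, #|T| = n, injective f, (forall x, f x < n) &
        (forall x y, adj x y = e (f x) (f y))].

(* Main.v *)
Require Import Defs.
From mathcomp Require Import all_boot zify.
Set Implicit Arguments. Unset Strict Implicit. Unset Printing Implicit Defensive.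

Section Gen.
Variable T : finType.
Variable adj : rel T.
Hypothesis adj_sym : symmetric adj.
Hypothesis adj_irr : irreflexive adj.
Hypothesis acyc : forall s : seq T, ucycle adj s -> size s <= 2.
Implicit Types S A : {set T}.

Definition rS S : rel T := fun a b => [&& a \in S, b \in S & adj a b].
Definition nb S (y : T) : {set T} := [set z in S | adj y z].
Definition br S (y x : T) : {set T} := [set z | connect (rS (S :\ y)) x z].

Lemma rS_sym S : symmetric (rS S).
Proof. by move=> a b; rewrite /rS adj_sym andbCA. Qed.

Lemma connS S a b : connect (rS S) a b = connect (rS S) b a.
Proof. exact: (sym_connect_sym (@rS_sym S)). Qed.

Lemma connect_ind (e : rel T) (z : T) (P : T -> Prop) :
  P z -> (forall t t', connect e z t -> P t -> e t t' -> P t') ->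
  forall t, connect e z t -> P t.
Proof.
move=> Pz step t /connectP [p pth ->].
elim/last_ind: p pth => [//|p a IH].
rewrite rcons_path => /andP[pp ea]; rewrite last_rcons.
apply: (step (last z p)) => //; last exact: IH.
by apply/connectP; exists p.
Qed.

Lemma connect_in S a b : connect (rS S) a b -> a \in S -> b \in S.
Proof.
move=> c aS; apply: (connect_ind (P := fun t => t \in S)) c => //.
by move=> t t' _ _ /and3P[].
Qed.

Lemma connect_mono S S' a b : S \subset S' -> connect (rS S) a b -> connect (rS S') a b.
Proof.
move=> sub; apply: connect_sub => u v /and3P[uS vS uv]; apply: connect1.
by rewrite /rS (subsetP sub _ uS) (subsetP sub _ vS).
Qed.

Lemma path_rS_all A x q : path (rS A) x q -> all (mem A) q.
Proof. by elim: q x => //= h q IH x /andP[/and3P[_ -> _] /IH]. Qed.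

Lemma path_rS_adj A x q : path (rS A) x q -> path adj x q.
Proof. by apply: sub_path => u v /and3P[]. Qed.

Lemma acyc_nb A y a b : y \notin A -> adj y a -> adj y b ->
  connect (rS A) a b -> a = b.
Proof.
move=> yA ya yb /connectP [p pth eb]; subst b; move: yb.
case: (shortenP pth) => p' pth' upq _ {pth}.
case: p' pth' upq => [//|a1 p'] pth' upq yb.
exfalso.
have aA : a \in A by case/andP: (pth') => /and3P[].
have allq := path_rS_all pth'.
have ynin : y \notin a :: a1 :: p'.
  rewrite inE negb_or; apply/andP; split.
    by apply: contraNneq yA => ->.
  by apply/negP => /(allP allq); apply/negP.
have H : ucycle adj (y :: a :: a1 :: p').
  rewrite /ucycle; apply/andP; split; last by rewrite cons_uniq ynin upq.
  rewrite /cycle -cats1 cat_path /= ya.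
  have := path_rS_adj pth' => /= /andP[-> ->] /=.
  by rewrite adj_sym andbT.
by move: (acyc H).
Qed.

Lemma card_partition_sum (I : {set T}) (B : T -> {set T}) (U : {set T}) :
  (forall i, i \in I -> B i \subset U) ->
  (forall t, t \in U -> exists2 i, i \in I & t \in B i) ->
  (forall i j t, i \in I -> j \in I -> t \in B i -> t \in B j -> i = j) ->
  #|U| = \sum_(i in I) #|B i|.
Proof.
move=> sub cov dis.
rewrite -sum1_card.
have e1 : forall t, t \in U -> 1 = \sum_(i in I) (t \in B i : nat).
  move=> t tU; have [i iI tBi] := cov t tU.
  rewrite (bigD1 i) //= tBi big1 // => j /andP[jI nji].
  case tBj: (t \in B j) => //; move: nji; by rewrite (dis _ _ _ jI iI tBj tBi) eqxx.
transitivity (\sum_(t in U) \sum_(i in I) (t \in B i : nat)).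
  by apply: eq_bigr => t tU; exact: e1.
rewrite exchange_big /=.
apply: eq_bigr => i iI.
rewrite -sum1_card big_mkcond [RHS]big_mkcond /=.
apply: eq_bigr => t _.
case tB: (t \in B i); case tU: (t \in U) => //.
by move: tU; rewrite (subsetP (sub i iI) t tB).
Qed.

Definition conn S := forall a b, a \in S -> b \in S -> connect (rS S) a b.

Lemma nbP S y x : reflect (x \in S /\ adj y x) (x \in nb S y).
Proof. by rewrite inE; apply: andP. Qed.

Lemma nb_neq S y x : x \in nb S y -> x != y.
Proof. by case/nbP=> _ yx; apply: contraTneq yx => ->; rewrite adj_irr. Qed.

Lemma nb_sym S y x : y \in S -> x \in nb S y -> y \in nb S x.
Proof. by move=> yS /nbP[_ yx]; rewrite inE yS adj_sym. Qed.

Lemma br_self S y x : x \in br S y x.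
Proof. by rewrite inE connect0. Qed.

Lemma br_sub S y x : x \in S -> x != y -> br S y x \subset S :\ y.
Proof.
move=> xS xy; apply/subsetP => t; rewrite inE => /connect_in; apply.
by rewrite !inE xy xS.
Qed.

Lemma br_subnb S y x : x \in nb S y -> br S y x \subset S :\ y.
Proof. by move=> xn; apply: br_sub (nb_neq xn); case/nbP: xn. Qed.

Lemma br_trans S y x t : t \in br S y x -> br S y t = br S y x.
Proof.
rewrite inE => c; apply/setP => u; rewrite !inE; apply/idP/idP => [|c2].
  exact: connect_trans.
by rewrite connS in c; apply: connect_trans c c2.
Qed.

Lemma br_disj S y x z t : x \in nb S y -> z \in nb S y ->
  t \in br S y x -> t \in br S y z -> x = z.
Proof.
move=> /nbP[_ yx] /nbP[_ yz] tx tz.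
apply: (acyc_nb (A := S :\ y) (y := y)) => //; first by rewrite !inE eqxx.
have := tx; rewrite inE => c1; move: tz; rewrite inE connS => c2.
exact: connect_trans c1 c2.
Qed.

Lemma br_edge S y x a b : x \in nb S y -> a \in br S y x -> b \in S -> b != y ->
  adj a b -> b \in br S y x.
Proof.
move=> xn ab bS by_ ab'.
have aS := subsetP (br_subnb xn) a ab.
move: ab; rewrite !inE => c; apply: (connect_trans c); apply: connect1.
by rewrite /rS aS !inE by_ bS ab'.
Qed.

Lemma br_conn S y x a b : x \in nb S y -> a \in br S y x -> b \in br S y x ->
  connect (rS (br S y x)) a b.
Proof.
move=> xn.
have H : forall t, t \in br S y x -> connect (rS (br S y x)) x t.
  move=> t; rewrite [t \in _]inE.
  apply: (connect_ind (P := fun t => connect (rS (br S y x)) x t)) => // u v cu c1 uv.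
  apply: (connect_trans c1); apply: connect1.
  case/and3P: uv => uS vS uv; rewrite /rS uv andbT !inE cu /=.
  by apply: connect_trans cu (connect1 _); rewrite /rS uS vS uv.
move=> ax bx; apply: connect_trans (H b bx); rewrite connS; exact: H.
Qed.

Lemma br_cover S y t : conn S -> y \in S -> t \in S -> t != y ->
  exists2 x, x \in nb S y & t \in br S y x.
Proof.
move=> cS yS tS ty.
have : connect (rS S) y t by exact: cS.
move=> c.
suff : t = y \/ exists2 x, x \in nb S y & t \in br S y x.
  by case=> // /eqP; rewrite (negbTE ty).
apply: (connect_ind (P := fun u => u = y \/ exists2 x, x \in nb S y & u \in br S y x)) c;
  first by left.
move=> u v _ Pu /and3P[uS vS uv].
have [->|vy] := eqVneq v y; first by left.
right; case: Pu => [eu|[x xn ux]].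
  by subst u; exists v; [rewrite inE vS uv | exact: br_self].
by exists x => //; apply: br_edge ux vS vy uv.
Qed.

Lemma sub_br S y x z : y \in S -> x \in nb S y -> z \in nb S x -> z != y ->
  br S x z \subset br S y x.
Proof.
move=> yS xn zn zy; apply/subsetP => t; rewrite [t \in br S x z]inE.
have xS : x \in S by case/nbP: xn.
have zS : z \in S by case/nbP: zn.
have Pz : z \in br S y x by apply: (br_edge xn (br_self _ _ _) zS zy); case/nbP: zn.
apply: (connect_ind (P := fun u => u \in br S y x)) => // u v czu ub uv.
have czv : connect (rS (S :\ x)) z v by apply: connect_trans czu (connect1 uv).
case/and3P: uv => _ /setD1P [vx vS] uv.
apply: (br_edge xn ub vS _ uv).
apply/eqP => vy; subst v.
have := acyc_nb (A := S :\ x) (y := x) (a := z) (b := y).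
rewrite !inE eqxx /= => /(_ isT); case/nbP: zn => _ -> /(_ isT).
case/nbP: (nb_sym yS xn) => _ -> /(_ isT) /(_ czv) /eqP; by rewrite (negbTE zy).
Qed.

Lemma br_compl S y x : conn S -> y \in S -> x \in nb S y ->
  br S x y = S :\: br S y x.
Proof.
move=> cS yS xn; have xS : x \in S by case/nbP: xn.
have yn := nb_sym yS xn.
apply/setP => t; apply/idP/idP.
  move=> tb; have := subsetP (br_subnb yn) t tb; rewrite in_setD1 => /andP[_ tS].
  rewrite in_setD tS andbT; move: tb; rewrite [t \in br S x y]inE.
  apply: (connect_ind (P := fun u => u \notin br S y x)).
    by apply/negP => /(subsetP (br_subnb xn)); rewrite !inE eqxx.
  move=> u v _ ub /and3P[uS]; rewrite !inE => /andP[vx vS] uv.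
  apply/negP => vb.
  have [uy|uny] := eqVneq u y.
    subst u.
    have := acyc_nb (A := S :\ y) (y := y) (a := x) (b := v).
    rewrite !inE eqxx /= => /(_ isT); case/nbP: xn => _ -> /(_ isT) /(_ uv).
    by move=> /(_ vb) /eqP; rewrite eq_sym (negbTE vx).
  rewrite !inE in uS; case/andP: uS => _ uS.
  have vb2 : v \in br S y x by rewrite inE.
  have ubr : u \in br S y x by apply: (br_edge xn vb2 uS uny); rewrite adj_sym.
  by rewrite ubr in ub.
rewrite in_setD => /andP[tnb tS].
have [->|ty] := eqVneq t y; first exact: br_self.
have [w wn tw] := br_cover cS yS tS ty.
have wx : w != x by apply: contraNneq tnb => <-.
exact: (subsetP (sub_br xS yn wn wx)).
Qed.

Lemma card_nb S y : conn S -> y \in S ->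
  #|S| = (\sum_(x in nb S y) #|br S y x|).+1.
Proof.
move=> cS yS; rewrite (cardsD1 y) yS add1n; congr (_.+1).
apply: card_partition_sum.
- by move=> i; apply: br_subnb.
- by move=> t; rewrite !inE => /andP[ty tS]; exact: br_cover.
- by move=> i j t; apply: br_disj.
Qed.

Lemma card_br S y x : conn S -> y \in S -> x \in nb S y ->
  #|br S y x| = (\sum_(z in nb S x :\ y) #|br S x z|).+1.
Proof.
move=> cS yS xn; have xS : x \in S by case/nbP: xn.
have := card_nb cS xS; rewrite (big_setD1 y (nb_sym yS xn)) /=.
rewrite br_compl // cardsDS; last by apply: subset_trans (br_subnb xn) (subsetDl _ _).
have : #|br S y x| <= #|S| by apply: subset_leq_card; apply: subset_trans (br_subnb xn) (subsetDl _ _).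
lia.
Qed.

Definition dissS S := \max_(D : {set T} | (D \subset S) && dissociation adj D) #|D|.
Definition dw S := [arg max_(D > set0 | (D \subset S) && dissociation adj D) #|D|].

Lemma dissociation0 : dissociation adj set0.
Proof. by apply/forall_inP => x; rewrite inE. Qed.

Lemma dw_prop S : [/\ dw S \subset S, dissociation adj (dw S) & #|dw S| = dissS S].
Proof.
rewrite /dissS (bigmax_eq_arg set0) ?sub0set ?dissociation0 //.
rewrite /dw; case: arg_maxnP; first by rewrite sub0set dissociation0.
by move=> D /andP[DS dD] _.
Qed.

Lemma dissS_ge S (D : {set T}) : D \subset S -> dissociation adj D -> #|D| <= dissS S.
Proof. by move=> DS dD; apply: (leq_bigmax_cond D); rewrite DS dD. Qed.

Lemma dissS_le S m : (forall D : {set T}, D \subset S -> dissociation adj D -> #|D| <= m) ->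
  dissS S <= m.
Proof. by move=> H; apply/bigmax_leqP => D /andP[]; apply: H. Qed.

Lemma dissP (D : {set T}) : reflect (forall x, x \in D -> #|[set y in D | adj x y]| <= 1)
  (dissociation adj D).
Proof. by apply: (iffP forall_inP). Qed.

Lemma diss_subset (D D' : {set T}) : D' \subset D -> dissociation adj D -> dissociation adj D'.
Proof.
move=> sub /dissP dD; apply/dissP => x xD'.
apply: leq_trans (dD x (subsetP sub x xD')); apply: subset_leq_card.
by apply/subsetP => z; rewrite !inE => /andP[/(subsetP sub) -> ->].
Qed.

Lemma diss_sum S y : conn S -> y \in S ->
  \sum_(x in nb S y) dissS (br S y x) <= dissS S.
Proof.
move=> cS yS.
pose U := \bigcup_(x in nb S y) dw (br S y x).
have dwsub : forall x, x \in nb S y -> dw (br S y x) \subset br S y x.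
  by move=> x _; case: (dw_prop (br S y x)).
have cardU : #|U| = \sum_(x in nb S y) #|dw (br S y x)|.
  apply: card_partition_sum.
  - by move=> i iI; apply: (bigcup_sup i).
  - by move=> t /bigcupP [i iI ti]; exists i.
  - move=> i j t iI jI ti tj; apply: (br_disj (t := t) iI jI).
      exact: (subsetP (dwsub i iI)).
    exact: (subsetP (dwsub j jI)).
have -> : \sum_(x in nb S y) dissS (br S y x) = #|U|.
  by rewrite cardU; apply: eq_bigr => x _; case: (dw_prop (br S y x)).
apply: dissS_ge.
  apply/bigcupsP => x xn; apply: subset_trans (dwsub x xn) _.
  by apply: subset_trans (br_subnb xn) (subsetDl _ _).
apply/dissP => t /bigcupP [x xn tx].
have [_ /dissP dx _] := dw_prop (br S y x).
apply: leq_trans (dx t tx); apply: subset_leq_card.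
apply/subsetP => z; rewrite !inE => /andP[/bigcupP [x' xn' zx'] tz]; rewrite tz andbT.
have tb := subsetP (dwsub x xn) t tx.
have zb' := subsetP (dwsub x' xn') z zx'.
have := subsetP (br_subnb xn') z zb'; rewrite in_setD1 => /andP[zy zS].
have zb := br_edge xn tb zS zy tz.
by rewrite (br_disj xn xn' zb zb').
Qed.

Lemma br_conn_set S y x : x \in nb S y -> conn (br S y x).
Proof. by move=> xn a b; apply: br_conn. Qed.

Lemma br_lt S y x : x \in nb S y -> y \in S -> #|br S y x| < #|S|.
Proof.
move=> xn yS; apply: (leq_trans (n := #|S :\ y|.+1)).
  by rewrite ltnS subset_leq_card // br_subnb.
by rewrite (cardsD1 y S) yS.
Qed.

Lemma term_le (A : {set T}) (F : T -> nat) x : x \in A -> F x <= \sum_(z in A) F z.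
Proof. by move=> xA; rewrite (bigD1 x) //= leq_addr. Qed.

Lemma leaf_exists S : conn S -> 2 <= #|S| ->
  exists q l, [/\ q \in S, l \in nb S q & nb S l = [set q]].
Proof.
move=> cS S2.
have [a aS] : exists a, a \in S by apply/card_gt0P; apply: leq_trans S2.
have [b bS ba] : exists2 b, b \in S & b != a.
  have : 0 < #|S :\ a| by rewrite (cardsD1 a S) aS in S2.
  by case/card_gt0P => b; rewrite in_setD1 => /andP[ba bS]; exists b.
have [x0 xn0 _] := br_cover cS aS bS ba.
suff H : forall k q l, q \in S -> l \in nb S q -> #|br S q l| <= k ->
   exists q l, [/\ q \in S, l \in nb S q & nb S l = [set q]].
  exact: (H _ a x0 aS xn0 (leqnn _)).
elim=> [|k IH] q l qS ln.
  by rewrite leqn0 cards_eq0 => /eqP e; move: (br_self S q l); rewrite e inE.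
move=> sz.
have [e|] := eqVneq (nb S l :\ q) set0.
  exists q, l; split => //; apply/setP => z; rewrite inE.
  apply/idP/eqP => [zn|->]; last exact: nb_sym.
  have : (z \in nb S l :\ q) = false by rewrite e inE.
  by rewrite in_setD1 zn andbT => /negbFE/eqP.
case/set0Pn => z; rewrite in_setD1 => /andP[zq zn].
have lS : l \in S by case/nbP: ln.
apply: (IH l z lS zn).
have := card_br cS qS ln; rewrite (bigD1 z) /= ?in_setD1 ?zq //.
lia.
Qed.

Lemma good_vertex S : conn S -> 3 <= #|S| ->
  exists2 y, y \in S & 2 <= \sum_(x in nb S y) (#|br S y x| %% 3).
Proof.
move=> cS S3.
have [q [l [qS ln nl]]] := leaf_exists cS (ltnW S3).
have bl1 : #|br S q l| = 1.
  rewrite (card_br cS qS ln) big1 // => z; rewrite in_setD1 nl inE.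
  by case/andP => /negbTE ->.
have [big|small] := leqP 2 (\sum_(x in nb S q) (#|br S q x| %% 3)); first by exists q.
move: small; rewrite (bigD1 l) //= bl1 => small.
have others0 : forall x, x \in nb S q :\ l -> #|br S q x| %% 3 = 0.
  move=> x xn; have : \sum_(x in nb S q | x != l) (#|br S q x| %% 3) = 0 by lia.
  move/eqP; rewrite sum_nat_eq0 => /forall_inP /(_ x).
  by rewrite in_setD1 andbC in xn; move/(_ xn)/eqP.
have cS' := card_nb cS qS; rewrite (bigD1 l) //= bl1 in cS'.
have [w wn] : exists w, w \in nb S q :\ l.
  apply/set0Pn; apply/negP => /eqP e.
  move: cS'; rewrite (eq_bigl (fun x => x \in nb S q :\ l)); last first.
    by move=> x; rewrite in_setD1 andbC.
  by rewrite e big_set0; lia.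
have wn' : w \in nb S q by move: wn; rewrite in_setD1 => /andP[].
have wS : w \in S by case/nbP: wn'.
exists w => //.
have qn := nb_sym qS wn'.
apply: leq_trans (term_le _ qn).
have := br_compl cS qS wn'; move/(congr1 (fun X : {set T} => #|X|)).
rewrite cardsDS; last by apply: subset_trans (br_subnb wn') (subsetDl _ _).
move=> ->.
have mS : #|S| %% 3 = 2.
  move: cS'; rewrite (eq_bigl (fun x => x \in nb S q :\ l)); last first.
    by move=> x; rewrite in_setD1 andbC.
  have h : (\sum_(i in nb S q :\ l) #|br S q i|) %% 3 = 0.
    by rewrite -modn_summ big1 ?mod0n // => x /others0.
  lia.
have := others0 w wn.
have : #|br S q w| <= #|S| by apply/ltnW/br_lt.
lia.
Qed.

Lemma small_diss S : #|S| <= 2 -> dissociation adj S.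
Proof.
move=> S2; apply/dissP => x xS.
have : [set z in S | adj x z] \subset S :\ x.
  apply/subsetP => z; rewrite !inE => /andP[zS xz]; rewrite zS andbT.
  by apply: contraTneq xz => ->; rewrite adj_irr.
move/subset_leq_card; rewrite (cardsD1 x S) xS in S2; lia.
Qed.

Lemma LB S : conn S -> 2 * #|S| + #|S| %% 3 <= 3 * dissS S.
Proof.
move: {2}#|S| (leqnn #|S|) => n; elim: n S => [|n IH] S.
  rewrite leqn0 => /eqP -> _; lia.
move=> Sn cS.
have [S2|S3] := leqP #|S| 2.
  have := dissS_ge (subxx S) (small_diss S2); lia.
have [y yS good] := good_vertex cS S3.
have e := card_nb cS yS.
apply: leq_trans (_ : 3 * \sum_(x in nb S y) dissS (br S y x) <= _); last first.
  by rewrite leq_mul2l /= diss_sum.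
rewrite big_distrr /=.
apply: leq_trans (_ : \sum_(x in nb S y) (2 * #|br S y x| + #|br S y x| %% 3) <= _); last first.
  apply: leq_sum => x xn; apply: IH; last exact: br_conn_set xn.
  by have := br_lt xn yS; lia.
rewrite big_split /= -big_distrr /=.
have hm := modn_summ (index_enum T) (fun x => x \in nb S y) (fun x => #|br S y x|) 3.
move: good hm; rewrite e.
set A := \sum_(_ in _) _; set R := \sum_(_ in _) _.
lia.
Qed.

Lemma count_le_sum (A : {set T}) (F : T -> nat) :
  #|[set x in A | F x != 0]| <= \sum_(x in A) F x.
Proof.
rewrite -sum1_card big_mkcond [X in _ <= X]big_mkcond /=.
apply: leq_sum => x _; rewrite inE; case: (x \in A) => //=.
by case: (F x).
Qed.

Lemma cond_of_diss S y : conn S -> 3 * dissS S <= 2 * #|S| -> y \in S ->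
  #|[set x in nb S y | #|br S y x| %% 3 != 0]| <= 2.
Proof.
move=> cS up yS.
have e := card_nb cS yS.
have h1 : 3 * \sum_(x in nb S y) dissS (br S y x) <= 3 * dissS S.
  by rewrite leq_mul2l /= diss_sum.
have h2 : \sum_(x in nb S y) (2 * #|br S y x| + #|br S y x| %% 3) <=
          3 * \sum_(x in nb S y) dissS (br S y x).
  rewrite big_distrr /=; apply: leq_sum => x xn; apply: LB; exact: br_conn_set.
move: h2; rewrite big_split /= -big_distrr /= => h2.
have := count_le_sum (nb S y) (fun x => #|br S y x| %% 3).
move: h1 h2 up; rewrite e.
set A := \sum_(_ in _) _; set R := \sum_(_ in _) _; set Dd := \sum_(_ in _) _.
lia.
Qed.

Definition cnt S y := #|[set x in nb S y | #|br S y x| %% 3 != 0]|.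
Definition Cond S := (#|S| %% 3 = 0) /\ (forall y, y \in S -> cnt S y <= 2).
Definition minB S m := forall a b, a \in S -> b \in nb S a -> #|br S a b| < m ->
  #|br S a b| %% 3 != 0.

Lemma nb_eq1 S d q : q \in nb S d -> nb S d :\ q = set0 -> nb S d = [set q].
Proof. by move=> qn e; rewrite -(setD1K qn) e setU0. Qed.

Lemma nb_eq2 S d q e : q \in nb S d -> nb S d :\ q = [set e] -> nb S d = [set q; e].
Proof. by move=> qn h; rewrite -(setD1K qn) h. Qed.

Lemma child_lt S q d z : conn S -> q \in S -> d \in nb S q -> z \in nb S d :\ q ->
  #|br S d z| < #|br S q d|.
Proof. by move=> cS qS dn zn; rewrite (card_br cS qS dn) (bigD1 z) //=; lia. Qed.

Lemma children_cnt S q d m : conn S -> q \in S -> d \in nb S q -> minB S m ->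
  #|br S q d| <= m -> q \in nb S d -> #|br S d q| %% 3 != 0 ->
  (#|nb S d :\ q|).+1 <= cnt S d.
Proof.
move=> cS qS dn mB le qn rq.
have dS : d \in S by case/nbP: dn.
apply: (@leq_trans #|q |: (nb S d :\ q)|); first by rewrite cardsU1 in_setD1 eqxx.
apply: subset_leq_card; apply/subsetP => z; rewrite in_setU1 in_setD1 inE.
case/orP => [/eqP ->|/andP[zq zn]]; first by rewrite qn.
have zn' : z \in nb S d :\ q by rewrite in_setD1 zq zn.
rewrite zn /=.
apply: (mB d z dS zn); apply: leq_trans (child_lt cS qS dn zn') le.
Qed.

Lemma LEAF1 S q d : conn S -> Cond S -> q \in S -> d \in nb S q ->
  #|br S q d| %% 3 = 1 -> #|br S d q| %% 3 != 0 -> minB S #|br S q d| ->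
  nb S d = [set q].
Proof.
move=> cS [m0 cc] qS dn r1 rq mB.
have dS : d \in S by case/nbP: dn.
have qn := nb_sym qS dn.
have h := children_cnt cS qS dn mB (leqnn _) qn rq.
have := cc d dS => c2.
have : #|nb S d :\ q| <= 1 by lia.
rewrite leq_eqVlt ltnS leqn0 cards_eq0 => /orP[/cards1P [z hz] | /eqP e]; last exact: nb_eq1.
have zn : z \in nb S d :\ q by rewrite hz inE.
have zS : z \in nb S d by move: zn; rewrite in_setD1 => /andP[].
have := mB d z dS zS (child_lt cS qS dn zn).
have := card_br cS qS dn; rewrite hz big_set1.
lia.
Qed.

Lemma compl_card S y x : conn S -> y \in S -> x \in nb S y ->
  #|br S x y| = #|S| - #|br S y x| /\ #|br S y x| <= #|S|.
Proof.
move=> cS yS xn; split; last by apply/ltnW/br_lt.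
rewrite br_compl // cardsDS //; apply: subset_trans (br_subnb xn) (subsetDl _ _).
Qed.

Lemma LEAF2 S q d : conn S -> Cond S -> q \in S -> d \in nb S q ->
  #|br S q d| %% 3 = 2 -> #|br S d q| %% 3 != 0 -> minB S #|br S q d| ->
  exists e, [/\ e != q, nb S d = [set q; e] & nb S e = [set d]].
Proof.
move=> cS [m0 cc] qS dn r2 rq mB.
have dS : d \in S by case/nbP: dn.
have qn := nb_sym qS dn.
have h := children_cnt cS qS dn mB (leqnn _) qn rq.
have := cc d dS => c2.
have : #|nb S d :\ q| <= 1 by lia.
rewrite leq_eqVlt ltnS leqn0 cards_eq0 => /orP[/cards1P [e he] | /eqP e0]; last first.
  by move: r2; rewrite (card_br cS qS dn) e0 big_set0.
have en : e \in nb S d :\ q by rewrite he inE.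
have eq : e != q by move: en; rewrite in_setD1 => /andP[].
have eS : e \in nb S d by move: en; rewrite in_setD1 => /andP[].
have lt := child_lt cS qS dn en.
have cb := card_br cS qS dn; rewrite he big_set1 in cb.
exists e; split => //; first exact: nb_eq2.
apply: (LEAF1 cS (conj m0 cc) dS eS).
- lia.
- have [-> le] := compl_card cS dS eS; lia.
- move=> a b aS bn ltb; apply: mB aS bn _; lia.
Qed.

Lemma SHAPE S c p : conn S -> Cond S -> c \in S ->
  (\sum_(z in nb S c :\ p) #|br S c z|).+1 %% 3 = 0 ->
  minB S (\sum_(z in nb S c :\ p) #|br S c z|).+1 ->
  (exists u u', [/\ u != u', nb S c :\ p = [set u; u'], nb S u = [set c] & nb S u' = [set c]])
  \/ (exists d e, [/\ nb S c :\ p = [set d], e != c, nb S d = [set c; e] & nb S e = [set d]]).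
Proof.
move=> cS [m0 cc] cS0.
set m := (\sum_(z in _) _).+1 => mm mB.
have chS : forall z, z \in nb S c :\ p -> z \in nb S c.
  by move=> z; rewrite in_setD1 => /andP[].
have chlt : forall z, z \in nb S c :\ p -> #|br S c z| < m.
  by move=> z zn; rewrite /m ltnS; apply: (term_le (fun z => #|br S c z|)).
have chnz : forall z, z \in nb S c :\ p -> #|br S c z| %% 3 != 0.
  by move=> z zn; apply: mB cS0 (chS z zn) (chlt z zn).
have chpar : forall z, z \in nb S c :\ p -> #|br S z c| %% 3 != 0.
  move=> z zn; have [-> le] := compl_card cS cS0 (chS z zn).
  have := chnz z zn; lia.
have chmin : forall z, z \in nb S c :\ p -> minB S #|br S c z|.
  move=> z zn a b aS bn lt; apply: mB aS bn _; have := chlt z zn; lia.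
have c2 : #|nb S c :\ p| <= 2.
  apply: leq_trans (cc c cS0); apply: subset_leq_card; apply/subsetP => z zn.
  by rewrite inE chS // chnz.
move: c2; rewrite leq_eqVlt => /orP[/cards2P [u [u' [uu' hu]]] | ].
  left; exists u, u'.
  have un : u \in nb S c :\ p by rewrite hu !inE eqxx.
  have un' : u' \in nb S c :\ p by rewrite hu !inE eqxx orbT.
  move: mm; rewrite /m hu big_setU1 ?inE //= big_set1 => mm.
  have := chnz u un; have := chnz u' un' => n1 n2.
  split => //.
    apply: (LEAF1 cS (conj m0 cc) cS0 (chS u un)) => //; [lia | exact: chpar | exact: chmin].
  apply: (LEAF1 cS (conj m0 cc) cS0 (chS u' un')) => //; [lia | exact: chpar | exact: chmin].
rewrite ltnS leq_eqVlt ltnS leqn0 cards_eq0 => /orP[/cards1P [d hd] | /eqP e0]; last first.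
  by move: mm; rewrite /m e0 big_set0.
right.
have dn : d \in nb S c :\ p by rewrite hd inE.
move: mm; rewrite /m hd big_set1 => mm.
have [e [ec h1 h2]] := LEAF2 cS (conj m0 cc) cS0 (chS d dn) ltac:(lia) (chpar d dn) (chmin d dn).
by exists d, e.
Qed.

Lemma REDGE S p c a b : p \in S -> c \in nb S p -> a \in br S p c -> b \in S ->
  b \notin br S p c -> adj a b -> a = c /\ b = p.
Proof.
move=> pS cn ab bS bnr ad.
have bp : b = p.
  apply/eqP; apply: contraNT bnr => bp; exact: (br_edge cn ab bS bp ad).
subst b; split => //.
apply/esym; apply: (acyc_nb (A := S :\ p) (y := p)).
- by rewrite !inE eqxx.
- by case/nbP: cn.
- by rewrite adj_sym.
- by move: ab; rewrite inE.
Qed.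

Lemma PRES S p c v w : conn S -> p \in S -> c \in nb S p -> #|br S p c| %% 3 = 0 ->
  v \in br S c p -> w \in nb (br S c p) v ->
  #|br (br S c p) v w| %% 3 = #|br S v w| %% 3.
Proof.
move=> cS pS cn r0 vS' wn.
set R := br S p c; set S' := br S c p.
have cS0 : c \in S by case/nbP: cn.
have pn := nb_sym pS cn.
have eS' : S' = S :\: R by rewrite /S' br_compl.
have inS' : forall t, (t \in S') = (t \in S) && (t \notin R).
  by move=> t; rewrite eS' in_setD andbC.
have RS : R \subset S by apply: subset_trans (br_subnb cn) (subsetDl _ _).
have vS : v \in S by move: vS'; rewrite inS' => /andP[].
have vR : v \notin R by move: vS'; rewrite inS' => /andP[].
have wS' : w \in S' by case/nbP: wn.
have wn0 : w \in nb S v.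
  by case/nbP: wn => wS2 adw; rewrite inE adw andbT; move: wS2; rewrite inS' => /andP[].
set K := br S' v w.
have KS' : K \subset S' :\ v by apply: br_subnb wn.
have sub1 : K \subset br S v w.
  apply/subsetP => t; rewrite !inE; apply: connect_mono.
  by apply: setSD; rewrite eS' subsetDl.
have sub2 : p \in K -> R \subset br S v w.
  move=> pK; have pb := subsetP sub1 p pK.
  have cR : c \in R by exact: br_self.
  have cv : c != v by apply: contraNneq vR => <-.
  have cb : c \in br S v w by apply: (br_edge wn0 pb cS0 cv); case/nbP: cn.
  apply/subsetP => r rR.
  rewrite -(br_trans cb) inE.
  apply: (connect_mono (S := R)); last exact: br_conn cn (br_self _ _ _) rR.
  apply/subsetP => t tR; rewrite in_setD1 (subsetP RS t tR) andbT.
  by apply: contraNneq vR => <-.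
set Q := K :|: [set t in R | p \in K].
have eQ : br S v w = Q.
  apply/eqP; rewrite eqEsubset; apply/andP; split; last first.
    apply/subsetP => t /setUP [tK | /setIdP [tR pK]].
      exact: (subsetP sub1).
    exact: (subsetP (sub2 pK)).
  apply/subsetP => t; rewrite [t \in br S v w]inE.
  apply: (connect_ind (P := fun t => t \in Q)); first by apply/setUP; left; apply: br_self.
  move=> u u' _ uQ /and3P[]; rewrite !in_setD1 => /andP[uv uS] /andP[u'v u'S] uu'.
  move: uQ => /setUP [uK | /setIdP [uR pK]].
    have uS' := subsetP KS' u uK; rewrite in_setD1 inS' in uS'.
    case/and3P: uS' => _ _ uR.
    case u'R: (u' \in R).
      have [_ up] := REDGE pS cn u'R uS uR ltac:(by rewrite adj_sym).
      by subst u; apply/setUP; right; apply/setIdP.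
    apply/setUP; left.
    apply: (br_edge wn uK _ u'v uu'); by rewrite inS' u'S u'R.
  case u'R: (u' \in R); first by apply/setUP; right; apply/setIdP.
  have [_ up] := REDGE pS cn uR u'S (negbT u'R) uu'.
  by subst u'; apply/setUP; left.
rewrite eQ cardsU.
have -> : K :&: [set t in R | p \in K] = set0.
  apply/setP => t; rewrite in_set0; apply/negP => /setIP [tK /setIdP [tR _]].
  have := subsetP KS' t tK; rewrite in_setD1 inS' => /and3P[_ _].
  by rewrite tR.
rewrite cards0 subn0.
case pK: (p \in K).
  have -> : [set t in R | true] = R by apply/setP => t; rewrite inE andbT.
  by rewrite -modnDm r0 addn0 modn_mod.
have -> : [set t in R | false] = set0 by apply/setP => t; rewrite !inE andbF.
by rewrite cards0 addn0.
Qed.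

Definition Pcl S := exists n (e : rel nat) (g : T -> nat),
  [/\ inTT n e, #|S| = n, {in S &, injective g}, {in S, forall x, g x < n} &
      {in S &, forall x y, adj x y = e (g x) (g y)}].

Lemma card3 (a b c : T) : a != b -> b != c -> a != c -> #|[set a; b; c]| = 3.
Proof.
move=> ab bc ac; rewrite setUC !cardsU1 cards1 !inE.
by rewrite (negbTE ab) eq_sym (negbTE ac) eq_sym (negbTE bc).
Qed.

Lemma in3 (a b c x : T) : (x \in [set a; b; c]) = [|| x == a, x == b | x == c].
Proof. by rewrite !inE orbA. Qed.

Lemma BASE S a b c : a != b -> b != c -> a != c -> S = [set a; b; c] ->
  adj a b -> adj b c -> ~~ adj a c -> Pcl S.
Proof.
move=> ab bc ac -> hab hbc hac.
pose g x := if x == a then 0 else if x == b then 1 else 2.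
have ga : g a = 0 by rewrite /g eqxx.
have gb : g b = 1 by rewrite /g eq_sym (negbTE ab) eqxx.
have gc : g c = 2 by rewrite /g eq_sym (negbTE ac) eq_sym (negbTE bc).
exists 3, (fun x y => sym_pair 0 1 x y || sym_pair 1 2 x y), g; split.
- by apply: TT_P3.
- exact: card3.
- move=> x y; rewrite !in3 => /or3P[]/eqP-> /or3P[]/eqP->;
  rewrite ?ga ?gb ?gc //.
- by move=> x; rewrite in3 => /or3P[]/eqP->; rewrite ?ga ?gb ?gc.
- have hba : adj b a by rewrite adj_sym.
  have hcb : adj c b by rewrite adj_sym.
  have hca : adj c a = false by rewrite adj_sym; apply: negbTE.
  move=> x y; rewrite !in3 => /or3P[]/eqP-> /or3P[]/eqP->;
  by rewrite ?ga ?gb ?gc ?adj_irr ?hab ?hbc ?hba ?hcb ?hca ?(negbTE hac).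
Qed.

Definition gext (g : T -> nat) n (a0 a1 a2 : T) x :=
  if x == a0 then n else if x == a1 then n.+1 else if x == a2 then n.+2 else g x.

Lemma STEP S S' n e g p a0 a1 a2 (e' : rel nat) attv :
  inTT n e -> #|S'| = n -> {in S' &, injective g} -> {in S', forall x, g x < n} ->
  {in S' &, forall x y, adj x y = e (g x) (g y)} -> p \in S' ->
  S = S' :|: [set a0; a1; a2] -> a0 \notin S' -> a1 \notin S' -> a2 \notin S' ->
  a0 != a1 -> a1 != a2 -> a0 != a2 -> inTT (n + 3) e' ->
  (forall x y, x < n -> y < n -> e' x y = e x y) ->
  (forall k x, k < n -> n <= x -> x < n + 3 -> e' x k = (x == attv) && (k == g p)) ->
  (forall k x, k < n -> n <= x -> x < n + 3 -> e' k x = (x == attv) && (k == g p)) ->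
  (forall x y, x \in [set a0; a1; a2] -> y \in [set a0; a1; a2] ->
     adj x y = e' (gext g n a0 a1 a2 x) (gext g n a0 a1 a2 y)) ->
  (forall a b, a \in [set a0; a1; a2] -> b \in S' ->
     adj a b = (gext g n a0 a1 a2 a == attv) && (b == p)) ->
  Pcl S.
Proof.
move=> tt cS' ginj gb gadj pS' eS n0 n1 n2 d01 d12 d02 tt' E1 E2 E3 ERR ECR.
set R := [set a0; a1; a2].
set g' := gext g n a0 a1 a2.
have g0 : g' a0 = n by rewrite /g' /gext eqxx.
have g1 : g' a1 = n.+1 by rewrite /g' /gext eq_sym (negbTE d01) eqxx.
have g2 : g' a2 = n.+2 by rewrite /g' /gext eq_sym (negbTE d02) eq_sym (negbTE d12) eqxx.
have gS' : forall x, x \in S' -> g' x = g x.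
  move=> x xS; rewrite /g' /gext.
  have -> : (x == a0) = false by apply/negbTE; apply: contraNneq n0 => <-.
  have -> : (x == a1) = false by apply/negbTE; apply: contraNneq n1 => <-.
  by have -> : (x == a2) = false by apply/negbTE; apply: contraNneq n2 => <-.
have gR : forall x, x \in R -> n <= g' x < n + 3.
  by move=> x; rewrite in3 => /or3P[]/eqP->; rewrite ?g0 ?g1 ?g2; apply/andP; split; lia.
have RS' : forall x, x \in R -> x \notin S'.
  by move=> x; rewrite in3 => /or3P[]/eqP->.
have inS : forall x, x \in S -> (x \in S') || (x \in R).
  by move=> x; rewrite eS in_setU.
exists (n + 3), e', g'; split => //.
- rewrite eS cardsU.
  have -> : S' :&: R = set0.
    apply/setP => x; rewrite in_set0; apply/negP => /setIP [xS xR].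
    by move: (RS' x xR); rewrite xS.
  by rewrite cards0 subn0 card3 // cS'.
- move=> x y xS yS; have := inS x xS; have := inS y yS.
  case/orP => yS'; case/orP => xS'.
  + by rewrite !gS' //; apply: ginj.
  + rewrite (gS' y yS') => hx; have h1 := gR x xS'; have h2 := gb y yS'.
    exfalso; clear -hx h1 h2; lia.
  + rewrite (gS' x xS') => hx; have h1 := gR y yS'; have h2 := gb x xS'.
    exfalso; clear -hx h1 h2; lia.
  + move: xS' yS'; rewrite !in3 => /or3P[]/eqP-> /or3P[]/eqP->; rewrite ?g0 ?g1 ?g2 // => h;
    exfalso; clear -h; lia.
- move=> x xS; case/orP: (inS x xS) => [xS'|xR].
    by rewrite gS' //; apply: leq_trans (gb x xS') (leq_addr _ _).
  by case/andP: (gR x xR).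
- move=> x y xS yS; have := inS x xS; have := inS y yS.
  case/orP => yS'; case/orP => xS'.
  + by rewrite !gS' // gadj // E1 //; apply: gb.
  + rewrite ECR // (gS' y yS'); have /andP[h1 h2] := gR x xS'.
    rewrite E2 //; last exact: gb.
    congr (_ && _); apply/eqP/eqP => [->//|]; exact: ginj.
  + rewrite adj_sym ECR // (gS' x xS'); have /andP[h1 h2] := gR y yS'.
    rewrite E3 //; last exact: gb.
    congr (_ && _); apply/eqP/eqP => [->//|]; exact: ginj.
  + exact: ERR.
Qed.

Definition eO1 n (e : rel nat) z : rel nat := fun x y => [|| [&& x < n, y < n & e x y],
  sym_pair n n.+1 x y, sym_pair n.+1 n.+2 x y | sym_pair n.+2 z x y].
Definition eO2 n (e : rel nat) z : rel nat := fun x y => [|| [&& x < n, y < n & e x y],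
  sym_pair n n.+1 x y, sym_pair n n.+2 x y | sym_pair n z x y].

Lemma gext_vals g n (a0 a1 a2 : T) : a0 != a1 -> a1 != a2 -> a0 != a2 ->
  [/\ gext g n a0 a1 a2 a0 = n, gext g n a0 a1 a2 a1 = n.+1 & gext g n a0 a1 a2 a2 = n.+2].
Proof.
move=> d01 d12 d02; rewrite /gext eqxx eq_sym (negbTE d01) eqxx.
by rewrite eq_sym (negbTE d02) eq_sym (negbTE d12) eqxx.
Qed.

Lemma ERR_gen g n (e' : rel nat) (a0 a1 a2 : T) : a0 != a1 -> a1 != a2 -> a0 != a2 ->
  adj a0 a1 = e' n n.+1 -> adj a1 a2 = e' n.+1 n.+2 -> adj a0 a2 = e' n n.+2 ->
  e' n.+1 n = e' n n.+1 -> e' n.+2 n.+1 = e' n.+1 n.+2 -> e' n.+2 n = e' n n.+2 ->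
  e' n n = false -> e' n.+1 n.+1 = false -> e' n.+2 n.+2 = false ->
  forall x y, x \in [set a0; a1; a2] -> y \in [set a0; a1; a2] ->
     adj x y = e' (gext g n a0 a1 a2 x) (gext g n a0 a1 a2 y).
Proof.
move=> d01 d12 d02 h01 h12 h02 s01 s12 s02 z0 z1 z2 x y.
have [g0 g1 g2] := gext_vals g n d01 d12 d02.
rewrite !in3 => /or3P[]/eqP-> /or3P[]/eqP->; rewrite ?g0 ?g1 ?g2 ?adj_irr //;
  by rewrite ?h01 ?h12 ?h02 // adj_sym ?h01 ?h12 ?h02.
Qed.

Lemma leaf_br S d t : conn S -> d \in S -> t \in nb S d -> nb S t = [set d] -> #|br S d t| = 1.
Proof.
move=> cS dS tn h; rewrite (card_br cS dS tn) h.
have -> : [set d] :\ d = set0 by apply/setP => x; rewrite !inE; case: (x == d).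
by rewrite big_set0.
Qed.

Lemma O1facts S c p d t : conn S -> c \in S -> nb S c :\ p = [set d] -> t != c ->
  nb S d = [set c; t] -> nb S t = [set d] ->
  [/\ d \in nb S c, t \in nb S d, (\sum_(z in nb S c :\ p) #|br S c z|).+1 = 3 &
      ([/\ c != d, d != t & c != t] /\ [/\ adj c d, adj d t & ~~ adj c t])].
Proof.
move=> cS cS0 hc tc hd ht.
have dn : d \in nb S c by move: (set11 d); rewrite -hc in_setD1 => /andP[].
have tn : t \in nb S d by rewrite hd !inE eqxx orbT.
have dS : d \in S by case/nbP: dn.
have tS : t \in S by case/nbP: tn.
have bt := leaf_br cS dS tn ht.
have bd : #|br S c d| = 2.
  rewrite (card_br cS cS0 dn) hd.
  have -> : [set c; t] :\ c = [set t].
    apply/setP => x; rewrite !inE; case: (eqVneq x c) => [->|//].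
    by rewrite eq_sym (negbTE tc).
  by rewrite big_set1 bt.
split => //; first by rewrite hc big_set1 bd.
split; split.
- by rewrite eq_sym (nb_neq dn).
- by rewrite eq_sym (nb_neq tn).
- by rewrite eq_sym.
- by case/nbP: dn.
- by case/nbP: tn.
- apply/negP => ct; have : c \in nb S t by rewrite inE cS0 adj_sym.
  rewrite ht inE => /eqP cd; move: (nb_neq dn); by rewrite cd eqxx.
Qed.

Lemma O2facts S c p u u' : conn S -> c \in S -> u != u' -> nb S c :\ p = [set u; u'] ->
  nb S u = [set c] -> nb S u' = [set c] ->
  [/\ u \in nb S c, u' \in nb S c, (\sum_(z in nb S c :\ p) #|br S c z|).+1 = 3 &
      ([/\ u != c, c != u' & u != u'] /\ [/\ adj u c, adj c u' & ~~ adj u u'])].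
Proof.
move=> cS cS0 uu' hc hu hu'.
have un : u \in nb S c by move: (setU11 u [set u']); rewrite -hc in_setD1 => /andP[].
have un' : u' \in nb S c.
  have : u' \in [set u; u'] by rewrite !inE eqxx orbT.
  by rewrite -hc in_setD1 => /andP[].
have b1 := leaf_br cS cS0 un hu.
have b2 := leaf_br cS cS0 un' hu'.
split => //.
  by rewrite hc big_setU1 ?inE //= big_set1 b1 b2.
split; split => //.
- exact: nb_neq un.
- by rewrite eq_sym (nb_neq un').
- by rewrite adj_sym; case/nbP: un.
- by case/nbP: un'.
- apply/negP => a; have : u' \in nb S u by rewrite inE a andbT; case/nbP: un'.
  rewrite hu inE => /eqP e; move: (nb_neq un'); by rewrite e eqxx.
Qed.

Lemma ECR_gen S p c (g' : T -> nat) attv : conn S -> p \in S -> c \in nb S p ->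
  g' c = attv -> (forall x, x \in br S p c -> g' x = attv -> x = c) ->
  forall a b, a \in br S p c -> b \in br S c p ->
  adj a b = (g' a == attv) && (b == p).
Proof.
move=> cS pS cn gc gx a b aR bS'.
have pn := nb_sym pS cn.
move: bS'; rewrite br_compl // in_setD => /andP[bR bS].
apply/idP/idP.
  by move=> ab; have [-> ->] := REDGE pS cn aR bS bR ab; rewrite gc !eqxx.
case/andP => /eqP ga /eqP ->; rewrite (gx a aR ga) adj_sym; by case/nbP: cn.
Qed.

Lemma setDU_eq S (R : {set T}) : R \subset S -> S = (S :\: R) :|: R.
Proof.
move=> RS; apply/setP => x; rewrite in_setU in_setD.
by case xR: (x \in R); rewrite ?(subsetP RS x xR) /= ?orbT ?orbF ?andbT //; case: (x \in S).
Qed.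

Lemma nf1 n : n.+1 = n -> False. Proof. lia. Qed.
Lemma nf2 n : n.+2 = n -> False. Proof. lia. Qed.
Lemma nf3 n : n = n.+2 -> False. Proof. lia. Qed.
Lemma nf4 n : n.+1 = n.+2 -> False. Proof. lia. Qed.

Lemma eO1_E1 n e z x y : x < n -> y < n -> eO1 n e z x y = e x y.
Proof. move=> xn yn; rewrite /eO1 /sym_pair; apply/idP/idP; lia. Qed.
Lemma eO1_E2 n e z k x : z < n -> k < n -> n <= x -> x < n + 3 ->
  eO1 n e z x k = (x == n.+2) && (k == z).
Proof. move=> *; rewrite /eO1 /sym_pair; apply/idP/idP; lia. Qed.
Lemma eO1_E3 n e z k x : z < n -> k < n -> n <= x -> x < n + 3 ->
  eO1 n e z k x = (x == n.+2) && (k == z).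
Proof. move=> *; rewrite /eO1 /sym_pair; apply/idP/idP; lia. Qed.
Lemma eO1_int n e z : z < n ->
  [/\ eO1 n e z n n.+1 = true, eO1 n e z n.+1 n.+2 = true & eO1 n e z n n.+2 = false] /\
  [/\ eO1 n e z n.+1 n = eO1 n e z n n.+1, eO1 n e z n.+2 n.+1 = eO1 n e z n.+1 n.+2 &
      eO1 n e z n.+2 n = eO1 n e z n n.+2] /\
  [/\ eO1 n e z n n = false, eO1 n e z n.+1 n.+1 = false & eO1 n e z n.+2 n.+2 = false].
Proof.
move=> zn; rewrite /eO1 /sym_pair.
split; [idtac | split]; split; first [apply/idP; lia | apply/negbTE/negP; lia | apply/idP/idP; lia].
Qed.

Lemma eO2_E1 n e z x y : x < n -> y < n -> eO2 n e z x y = e x y.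
Proof. move=> xn yn; rewrite /eO2 /sym_pair; apply/idP/idP; lia. Qed.
Lemma eO2_E2 n e z k x : z < n -> k < n -> n <= x -> x < n + 3 ->
  eO2 n e z x k = (x == n) && (k == z).
Proof. move=> *; rewrite /eO2 /sym_pair; apply/idP/idP; lia. Qed.
Lemma eO2_E3 n e z k x : z < n -> k < n -> n <= x -> x < n + 3 ->
  eO2 n e z k x = (x == n) && (k == z).
Proof. move=> *; rewrite /eO2 /sym_pair; apply/idP/idP; lia. Qed.
Lemma eO2_int n e z : z < n ->
  [/\ eO2 n e z n n.+1 = true, eO2 n e z n.+1 n.+2 = false & eO2 n e z n n.+2 = true] /\
  [/\ eO2 n e z n.+1 n = eO2 n e z n n.+1, eO2 n e z n.+2 n.+1 = eO2 n e z n.+1 n.+2 &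
      eO2 n e z n.+2 n = eO2 n e z n n.+2] /\
  [/\ eO2 n e z n n = false, eO2 n e z n.+1 n.+1 = false & eO2 n e z n.+2 n.+2 = false].
Proof.
move=> zn; rewrite /eO2 /sym_pair.
split; [idtac | split]; split; first [apply/idP; lia | apply/negbTE/negP; lia | apply/idP/idP; lia].
Qed.

Ltac ecomp := rewrite /eO1 /eO2 /sym_pair; (try apply/esym);
  first [apply/idP; lia | apply/negbTE/negP; lia | apply/idP/idP; lia].

Lemma MAIN S : conn S -> 0 < #|S| -> Cond S -> Pcl S.
Proof.
move: {2}#|S| (leqnn #|S|) => N; elim: N S => [|N IH] S hN cS pos cond.
  by move: pos; rewrite lt0n -leqn0 hN.
have [m0 cc] := cond.
case: (boolP [exists p, exists c, [&& p \in S, c \in nb S p & #|br S p c| %% 3 == 0]]) => [ex | nex].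
- pose P k := [exists p, exists c, [&& p \in S, c \in nb S p, #|br S p c| %% 3 == 0 & #|br S p c| == k]].
  have exP : exists k, P k.
    case/existsP: ex => p /existsP [c /and3P [pS cn r0]].
    exists #|br S p c|; apply/existsP; exists p; apply/existsP; exists c.
    by rewrite pS cn r0 eqxx.
  case: (ex_minnP exP) => m /existsP [p /existsP [c /and4P [pS cn r0 /eqP szm]]] minm.
  have mB : minB S m.
    move=> a b aS bn lt; apply/negP => r.
    have : P #|br S a b| by apply/existsP; exists a; apply/existsP; exists b; rewrite aS bn r eqxx.
    by move/minm; rewrite leqNgt lt.
  have cS0 : c \in S by case/nbP: cn.
  have pn := nb_sym pS cn.
  have hm := card_br cS pS cn; rewrite szm in hm.
  have mm : (\sum_(z in nb S c :\ p) #|br S c z|).+1 %% 3 = 0 by rewrite -hm -szm; apply/eqP.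
  have mB' : minB S (\sum_(z in nb S c :\ p) #|br S c z|).+1 by rewrite -hm.
  have sh := SHAPE cS cond cS0 mm mB'.
  set R := br S p c in szm r0 hm.
  have RS : R \subset S by apply: subset_trans (br_subnb cn) (subsetDl _ _).
  have eS' : br S c p = S :\: R by rewrite br_compl.
  have pS' : p \in br S c p by apply: br_self.
  have cardS' : #|br S c p| = #|S| - 3.
    by rewrite eS' cardsDS // szm hm; case: sh => [[u [u' [uu' hc hu hu']]] | [d [t [hc tc hd ht]]]];
      [ case: (O2facts cS cS0 uu' hc hu hu') | case: (O1facts cS cS0 hc tc hd ht)] => _ _ ->.
  have R3 : #|R| = 3.
    by rewrite szm hm; case: sh => [[u [u' [uu' hc hu hu']]] | [d [t [hc tc hd ht]]]];
      [ case: (O2facts cS cS0 uu' hc hu hu') | case: (O1facts cS cS0 hc tc hd ht)] => _ _ ->.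
  have RleS : #|R| <= #|S| by apply: subset_leq_card.
  have condS' : Cond (br S c p).
    split; first by rewrite cardS'; move: m0 RleS; rewrite R3; lia.
    move=> v vS'; apply: leq_trans (cc v _); last by move: vS'; rewrite eS' in_setD => /andP[].
    apply: subset_leq_card; apply/subsetP => w /setIdP [wn r].
    have [wS' vw] := nbP _ _ _ wn.
    apply/setIdP; split; last by rewrite -(PRES cS pS cn (eqP r0) vS' wn).
    apply/nbP; split => //.
    by move: wS'; rewrite eS' in_setD => /andP[].
  have [n [e [g [tt cSn ginj gb gadj]]]] : Pcl (br S c p).
    apply: IH => //.
    - rewrite cardS'; move: hN pos; lia.
    - exact: br_conn_set pn.
    - by apply/card_gt0P; exists p.
  have gp : g p < n by apply: gb.
  have ES : S = br S c p :|: R by rewrite eS'; apply: setDU_eq.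
  case: sh => [[u [u' [uu' hc hu hu']]] | [d [t [hc tc hd ht]]]].
  + have [un un' _ [[uc cu' _] [auc acu' nuu']]] := O2facts cS cS0 uu' hc hu hu'.
    have uR : u \in R by apply: (subsetP (sub_br pS cn un _)) (br_self _ _ _);
      move: (setU11 u [set u']); rewrite -hc in_setD1 => /andP[].
    have u'R : u' \in R.
      apply: (subsetP (sub_br pS cn un' _)) (br_self _ _ _).
      have : u' \in [set u; u'] by rewrite !inE eqxx orbT.
      by rewrite -hc in_setD1 => /andP[].
    have cR : c \in R by apply: br_self.
    have eR : R = [set c; u; u'].
      apply/eqP; rewrite eq_sym eqEcard R3 card3 ?leqnn ?andbT //; last by rewrite eq_sym.
      by apply/subsetP => x; rewrite in3 => /or3P[]/eqP->.
    have nS' : forall x, x \in R -> x \notin br S c p by move=> x xR; rewrite eS' in_setD xR.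
    have cu : c != u by rewrite eq_sym.
    apply: (STEP (S' := br S c p) (a0 := c) (a1 := u) (a2 := u') (e' := eO2 n e (g p)) (attv := n)
              tt cSn ginj gb gadj pS' _ (nS' c cR) (nS' u uR) (nS' u' u'R) cu uu' cu').
    * by rewrite -eR.
    * by apply: TT_O2 tt gp _.
    * by move=> x y xn yn; apply: eO2_E1.
    * by move=> k x kn h1 h2; apply: eO2_E2.
    * by move=> k x kn h1 h2; apply: eO2_E3.
    * have [[i1 i2 i3] [[s1 s2 s3] [z1 z2 z3]]] := eO2_int e gp.
      have acu : adj c u by rewrite adj_sym.
      by apply: ERR_gen => //; rewrite ?acu ?acu' ?(negbTE nuu') ?i1 ?i2 ?i3.
    * rewrite -eR; have [g0 g1 g2] := gext_vals g n cu uu' cu'.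
      apply: (ECR_gen (g' := gext g n c u u') cS pS cn g0).
      move=> x; rewrite -/R eR in3 => /or3P[]/eqP->; rewrite ?g0 ?g1 ?g2 //.
        by move/nf1.
      by move/nf2.
  + have [dn tn _ [[cd dt ct] [acd adt nct]]] := O1facts cS cS0 hc tc hd ht.
    have dp : d != p by move: (set11 d); rewrite -hc in_setD1 => /andP[].
    have dR : d \in R by apply: (subsetP (sub_br pS cn dn dp)) (br_self _ _ _).
    have tR : t \in R.
      apply: (subsetP (sub_br pS cn dn dp)).
      by apply: (subsetP (sub_br cS0 dn tn tc)) (br_self _ _ _).
    have cR : c \in R by apply: br_self.
    have eR : R = [set t; d; c].
      apply/eqP; rewrite eq_sym eqEcard R3 card3 ?leqnn ?andbT //; try by rewrite eq_sym.
      by apply/subsetP => x; rewrite in3 => /or3P[]/eqP->.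
    have nS' : forall x, x \in R -> x \notin br S c p by move=> x xR; rewrite eS' in_setD xR.
    have td : t != d by rewrite eq_sym.
    have dc : d != c by rewrite eq_sym.
    apply: (STEP (S' := br S c p) (a0 := t) (a1 := d) (a2 := c) (e' := eO1 n e (g p)) (attv := n.+2)
              tt cSn ginj gb gadj pS' _ (nS' t tR) (nS' d dR) (nS' c cR) td dc tc).
    * by rewrite -eR.
    * by apply: TT_O1 tt gp _.
    * by move=> x y xn yn; apply: eO1_E1.
    * by move=> k x kn h1 h2; apply: eO1_E2.
    * by move=> k x kn h1 h2; apply: eO1_E3.
    * have [[i1 i2 i3] [[s1 s2 s3] [z1 z2 z3]]] := eO1_int e gp.
      have atd : adj t d by rewrite adj_sym.
      have adc : adj d c by rewrite adj_sym.
      have ntc : adj t c = false by rewrite adj_sym; apply: negbTE.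
      by apply: ERR_gen => //; rewrite ?atd ?adc ?ntc ?i1 ?i2 ?i3.
    * rewrite -eR; have [g0 g1 g2] := gext_vals g n td dc tc.
      apply: (ECR_gen (g' := gext g n t d c) cS pS cn g2).
      move=> x; rewrite -/R eR in3 => /or3P[]/eqP->; rewrite ?g0 ?g1 ?g2 //.
        by move/nf3.
      by move/nf4.
- case/card_gt0P: pos => c cS0.
  have e1 : nb S c :\ c = nb S c.
    apply/setP => x; rewrite in_setD1; case: (eqVneq x c) => [->|//].
    by rewrite inE adj_irr andbF.
  have hS := card_nb cS cS0; rewrite -e1 in hS.
  have mm : (\sum_(z in nb S c :\ c) #|br S c z|).+1 %% 3 = 0 by rewrite -hS.
  have mB : minB S (\sum_(z in nb S c :\ c) #|br S c z|).+1.
    move=> a b aS bn _; apply/negP => r; move/negP: nex; apply.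
    by apply/existsP; exists a; apply/existsP; exists b; rewrite aS bn r.
  case: (SHAPE cS cond cS0 mm mB) => [[u [u' [uu' hc hu hu']]] | [d [t [hc tc hd ht]]]].
  + have [un un' m3 [[uc cu' _] [auc acu' nuu']]] := O2facts cS cS0 uu' hc hu hu'.
    apply: (BASE (a := u) (b := c) (c := u')) => //.
    apply/eqP; rewrite eq_sym eqEcard card3 // hS m3 leqnn andbT.
    apply/subsetP => x; rewrite in3 => /or3P[]/eqP->; rewrite ?cS0 //.
      by case/nbP: un.
    by case/nbP: un'.
  + have [dn tn m3 [[cd dt ct] [acd adt nct]]] := O1facts cS cS0 hc tc hd ht.
    apply: (BASE (a := c) (b := d) (c := t)) => //.
    apply/eqP; rewrite eq_sym eqEcard card3 // hS m3 leqnn andbT.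
    apply/subsetP => x; rewrite in3 => /or3P[]/eqP->; rewrite ?cS0 //.
      by case/nbP: dn.
    by case/nbP: tn.
Qed.

Section UB.
Variable f : T -> nat.
Hypothesis finj : injective f.

Lemma card_fiber k : #|[set x | f x == k]| <= 1.
Proof.
case: (set_0Vmem [set x | f x == k]) => [->|[x xk]]; first by rewrite cards0.
rewrite -(cards1 x) subset_leq_card //; apply/subsetP => z; rewrite !inE => /eqP zk.
by apply/eqP/finj; move: xk; rewrite inE => /eqP ->.
Qed.

Lemma three_bound (D S' : {set T}) mid o1 o2 :
  dissociation adj D ->
  (forall x, x \in D -> x \notin S' -> [|| f x == mid, f x == o1 | f x == o2]) ->
  mid != o1 -> mid != o2 ->
  (forall a b, a \in D -> b \in D -> f a = mid -> (f b == o1) || (f b == o2) -> adj a b) ->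
  #|D :\: S'| <= 2.
Proof.
move=> /dissP dD cov n1 n2 adjm.
case: (boolP [exists x, (x \in D :\: S') && (f x == mid)]).
  case/existsP => x /andP[xX /eqP xm].
  rewrite (cardsD1 x) xX add1n ltnS.
  apply: leq_trans (dD x _); last by move: xX; rewrite in_setD => /andP[].
  apply: subset_leq_card; apply/subsetP => z; rewrite !inE => /and3P[zx zS' zD].
  rewrite zD /=; have xD : x \in D by move: xX; rewrite in_setD => /andP[].
  apply: adjm => //; have := cov z zD zS'; case/or3P => [/eqP zm| -> | ->]; rewrite ?orbT //.
  by move: zx; rewrite (finj (etrans zm (esym xm))) eqxx.
move=> nomid.
suff sub : D :\: S' \subset [set z | f z == o1] :|: [set z | f z == o2].
  apply: leq_trans (subset_leq_card sub) _.
  apply: leq_trans (leq_card_setU [set z | f z == o1] [set z | f z == o2]).1 _.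
  exact: (leq_add (card_fiber o1) (card_fiber o2)).
apply/subsetP => z zX; rewrite !inE.
have : ~~ ((z \in D :\: S') && (f z == mid)).
  by apply: contra nomid => h; apply/existsP; exists z.
move: zX; rewrite in_setD => /andP[zS' zD].
rewrite zS' zD /= => fm.
by move: (cov z zD zS'); rewrite (negbTE fm).
Qed.

Lemma sp_false a b x y : x != a -> x != b -> sym_pair a b x y = false.
Proof. by rewrite /sym_pair => /negbTE -> /negbTE ->. Qed.

Lemma sp_false2 a b x y : x != a -> y != a -> sym_pair a b x y = false.
Proof. by rewrite /sym_pair => /negbTE -> /negbTE ->; rewrite andbF. Qed.

Lemma UB_step n (e e' : rel nat) mid o1 o2 (S : {set T}) :
  (forall S : {set T}, (forall x, (x \in S) = (f x < n)) ->
     (forall x y, x \in S -> y \in S -> adj x y = e (f x) (f y)) -> 3 * dissS S <= 2 * n) ->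
  (forall x, (x \in S) = (f x < n + 3)) ->
  (forall x y, x \in S -> y \in S -> adj x y = e' (f x) (f y)) ->
  (forall x y, x < n -> y < n -> e' x y = e x y) ->
  (forall k, n <= k -> k < n + 3 -> [|| k == mid, k == o1 | k == o2]) ->
  mid != o1 -> mid != o2 ->
  e' mid o1 -> e' mid o2 ->
  3 * dissS S <= 2 * (n + 3).
Proof.
move=> IH HS Hadj He hcov d1 d2 a1 a2.
pose S' := [set x | f x < n].
have sub : S' \subset S by apply/subsetP => x; rewrite inE HS => ?; lia.
have IH' : 3 * dissS S' <= 2 * n.
  apply: IH => [x|x y xS yS]; first by rewrite inE.
  rewrite (Hadj x y (subsetP sub x xS) (subsetP sub y yS)) He //.
    by move: xS; rewrite inE.
  by move: yS; rewrite inE.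
suff : dissS S <= dissS S' + 2 by lia.
apply: dissS_le => D DS dD.
rewrite -(cardsID S' D); apply: leq_add.
  by apply: dissS_ge; [exact: subsetIr | apply: diss_subset dD; exact: subsetIl].
apply: (three_bound dD (mid := mid) (o1 := o1) (o2 := o2)) => //.
  move=> x xD; rewrite inE -leqNgt => nx; have := (subsetP DS x xD); rewrite HS => xl.
  exact: hcov.
move=> a b aD bD fa fb.
rewrite (Hadj a b (subsetP DS a aD) (subsetP DS b bD)) fa.
by case/orP: fb => /eqP ->.
Qed.

Lemma UB n e : inTT n e -> forall S : {set T}, (forall x, (x \in S) = (f x < n)) ->
  (forall x y, x \in S -> y \in S -> adj x y = e (f x) (f y)) -> 3 * dissS S <= 2 * n.
Proof.
elim=> {n e} [e He | n e e' z _ IH zn He' | n e e' z _ IH zn He'] S HS Hadj.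
- suff : dissS S <= 2 by lia.
  apply: dissS_le => D DS dD; rewrite -(setD0 D).
  apply: (three_bound dD (mid := 1) (o1 := 0) (o2 := 2)) => //.
    move=> x xD _; have := subsetP DS x xD; rewrite HS.
    by case: (f x) => [|[|[|]]].
  move=> a b aD bD fa fb.
  rewrite (Hadj a b (subsetP DS a aD) (subsetP DS b bD)) He fa.
  by case/orP: fb => /eqP ->.
- apply: (UB_step (mid := n.+1) (o1 := n) (o2 := n.+2) IH HS Hadj).
  + move=> x y xn yn; rewrite He' xn yn /=.
    rewrite !sp_false2 ?orbF //; apply/negP => /eqP; lia.
  + move=> k k1 k2; have : k = n \/ k = n.+1 \/ k = n.+2 by lia.
    by case=> [->|[->|->]]; rewrite !eqxx ?orbT.
  + apply/negP => /eqP; lia.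
  + apply/negP => /eqP; lia.
  + by rewrite He'; apply/orP; right; apply/orP; left; rewrite /sym_pair !eqxx orbT.
  + by rewrite He'; apply/orP; right; apply/orP; right; apply/orP; left; rewrite /sym_pair !eqxx.
- apply: (UB_step (mid := n) (o1 := n.+1) (o2 := n.+2) IH HS Hadj).
  + move=> x y xn yn; rewrite He' xn yn /=.
    rewrite !sp_false2 ?orbF //; apply/negP => /eqP; lia.
  + move=> k k1 k2; have : k = n \/ k = n.+1 \/ k = n.+2 by lia.
    by case=> [->|[->|->]]; rewrite !eqxx ?orbT.
  + apply/negP => /eqP; lia.
  + apply/negP => /eqP; lia.
  + by rewrite He'; apply/orP; right; apply/orP; left; rewrite /sym_pair !eqxx.
  + by rewrite He'; apply/orP; right; apply/orP; right; apply/orP; left; rewrite /sym_pair !eqxx.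
Qed.
End UB.
Lemma comp_count y : conn setT ->
  #|[set C in components_minus adj y | #|C| %% 3 != 0]| = cnt setT y.
Proof.
move=> cT.
have eqc : forall x, [set z | connect (del_adj adj y) x z] = br setT y x.
  move=> x; apply/setP => z; rewrite !inE; apply: eq_connect => a b.
  by rewrite /del_adj /rS !inE !andbT.
have ecm : components_minus adj y = [set br setT y x | x in nb setT y].
  apply/setP => C; apply/imsetP/imsetP => [[x xy ->]|[x xn ->]].
    rewrite eqc; have xy' : x != y by move: xy; rewrite !inE.
    have [w wn xw] := br_cover cT (in_setT y) (in_setT x) xy'.
    by exists w => //; rewrite (br_trans xw).
  by exists x; [rewrite !inE (nb_neq xn) | rewrite eqc].
rewrite ecm.
have -> : [set C in [set br setT y x | x in nb setT y] | #|C| %% 3 != 0] =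
          [set br setT y x | x in [set x in nb setT y | #|br setT y x| %% 3 != 0]].
  apply/setP => C; apply/setIdP/imsetP => [[/imsetP [x xn ->] r]|[x /setIdP [xn r] ->]].
    by exists x => //; apply/setIdP.
  by split => //; apply/imsetP; exists x.
rewrite card_in_imset // => x x' /setIdP [xn _] /setIdP [xn' _] e.
by apply: (br_disj xn xn' (br_self setT y x)); rewrite -e br_self.
Qed.

Theorem theorem_gen : (forall x y : T, connect adj x y) -> 0 < #|T| ->
  [/\ (3 * diss adj = 2 * #|T| <-> in_class_T adj),
      (in_class_T adj <->
         (#|T| %% 3 = 0 /\
          forall y : T,
            #|[set C in components_minus adj y | #|C| %% 3 != 0]| <= 2)) &
      (3 * diss adj = 2 * #|T| <->
         (#|T| %% 3 = 0 /\
          forall y : T,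
            #|[set C in components_minus adj y | #|C| %% 3 != 0]| <= 2))].
Proof.
move=> ct pos.
have cT : conn setT.
  move=> a b _ _; rewrite (eq_connect (e' := adj)) //.
  by move=> u v; rewrite /rS !in_setT.
have dd : diss adj = dissS setT.
  by rewrite /diss /dissS; apply: eq_bigl => D; rewrite subsetT.
have nT : #|[set: T]| = #|T| by rewrite cardsT.
have AC : 3 * diss adj = 2 * #|T| ->
   (#|T| %% 3 = 0 /\ forall y : T, #|[set C in components_minus adj y | #|C| %% 3 != 0]| <= 2).
  move=> h; split; first by lia.
  move=> y; rewrite comp_count //; apply: (cond_of_diss cT _ (in_setT y)).
  by rewrite -dd nT h.
have CB : (#|T| %% 3 = 0 /\ forall y : T, #|[set C in components_minus adj y | #|C| %% 3 != 0]| <= 2) ->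
   in_class_T adj.
  case=> m0 cy.
  have [n [e [g [tt cn ginj gb gadj]]]] : Pcl setT.
    apply: MAIN => //; first by rewrite nT.
    split; first by rewrite nT.
    by move=> y _; rewrite -comp_count.
  exists n, e, g; split => //.
  - by rewrite -cn nT.
  - by move=> x y; apply: ginj; rewrite in_setT.
  - by move=> x; apply: gb; rewrite in_setT.
  - by move=> x y; apply: gadj; rewrite in_setT.
have BA : in_class_T adj -> 3 * diss adj = 2 * #|T|.
  case=> n [e [f [tt cn finj fb fadj]]].
  have up := UB finj tt (S := setT) (fun x => ltac:(by rewrite in_setT fb)) (fun x y _ _ => fadj x y).
  have lo := LB cT.
  by move: up lo; rewrite -dd nT cn; lia.
split; split; auto.
Qed.

End Gen.

Unset Implicit Arguments.

Theorem theorem2 (T : finType) (adj : rel T)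
  (adj_sym : symmetric adj) (adj_irr : irreflexive adj)
  (Htree : is_tree adj) :
  let n := #|T| in
  [/\ (3 * diss adj = 2 * n <-> in_class_T adj),
      (in_class_T adj <->
         (n %% 3 = 0 /\
          forall y : T,
            #|[set C in components_minus adj y | #|C| %% 3 != 0]| <= 2)) &
      (3 * diss adj = 2 * n <->
         (n %% 3 = 0 /\
          forall y : T,
            #|[set C in components_minus adj y | #|C| %% 3 != 0]| <= 2))].
Proof.
case: Htree => pos [ct acyc].
exact: (theorem_gen adj_sym adj_irr acyc ct pos).
Qed.
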